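(* Let $f:\mathbb{R}^{2}\to\mathbb{R}$ be smooth and either quasi normal or quasi split normal. Then for all $x,y\in\mathbb{R}$ and all $k_{1}\neq0$, $k_{2}\neq0$, the limits $F(k_{1},y)=\lim_{r\to\infty}\int_{-r}^{r}f(x,y)e^{-ik_{1}x}\,dx$ and $G(x,k_{2})=\lim_{r\to\infty}\int_{-r}^{r}f(x,y)e^{-ik_{2}y}\,dy$ both exist, and $y\mapsto F(k_{1},y)$ and $x\mapsto G(x,k_{2})$ are of moderate decrease (bounded by a constant times $|y|^{-2}$, resp. $|x|^{-2}$, for $|y|>1$, resp. $|x|>1$).
   Context: One-variable notions: a smooth $g:\mathbb{R}\setminus V\to\mathbb{R}$, $V\subset\mathbb{R}$ bounded closed, is analytic at infinity if there exist $\epsilon_{1},\epsilon_{2}>0$ such that $g(1/t)=\sum_{n\geq1}a_{n}t^{n}$ for $0<t<\epsilon_{1}$ and $g(1/t)=\sum_{n\geq1}b_{n}t^{n}$ for $-\epsilon_{2}<t<0$, with real coefficients and both power series absolutely convergent on the respective intervals. Two-variable notions: let $f:\mathbb{R}^{2}\setminus W\to\mathbb{R}$ be smooth with $W$ closed and bounded (here $W=\emptyset$). $f$ is of very moderate decrease if there is $C>0$ with $|f(x,y)|\leq\frac{C}{|(x,y)|}$ for $|(x,y)|>1$, and of moderate decrease if $|f(x,y)|\leq\frac{C}{|(x,y)|^{2}}$ for $|(x,y)|>1$. For fixed $x$ write $f_{x}(y)=f(x,y)$ and for fixed $y$ write $f_{y}(x)=f(x,y)$. Conditions: (i) for every $x$,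 $f_{x}$ is analytic at infinity; (ii) for every $y$, $f_{y}$ is analytic at infinity; (iii) $f$ is of very moderate decrease; (iv) $\frac{\partial f}{\partial x}$ and $\frac{\partial f}{\partial y}$ are of moderate decrease. $f$ is quasi normal if (i)–(iv) hold and (v)': for sufficiently large $x$, the zeros of $f_{x}$ are contained in a union $(-M_{x},-N_{x})\cup(N_{x},M_{x})$ of bounded intervals with $M_{x}-N_{x}$ uniformly bounded in $x$, and similarly for $(f_{x})'$, $(f_{x})''$ (each with its own such intervals), and for $f_{y},(f_{y})',(f_{y})''$ with sufficiently large $y$. $f$ is quasi split normal if (i)–(iv) hold and (v)'': for sufficiently large $(x,y)$, $f=f_{1}+f_{2}$ with $f_{1},f_{2}$ quasi normal and $f,f_{1},f_{2}$ smooth. *)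

(* Defs.v *)
From Stdlib Require Import Reals List.
From Coquelicot Require Import Coquelicot.
Open Scope R_scope.

Definition norm2 (x y : R) : R := sqrt (x ^ 2 + y ^ 2).

Definition dx (f : R -> R -> R) : R -> R -> R :=
  fun x y => Derive (fun t => f t y) x.
Definition dy (f : R -> R -> R) : R -> R -> R :=
  fun x y => Derive (fun t => f x t) y.

(* iterated partial derivative along a word of directions (true = x, false = y) *)
Fixpoint iter_partial (l : list bool) (f : R -> R -> R) : R -> R -> R :=
  match l with
  | nil => f
  | b :: l' => if b then dx (iter_partial l' f) else dy (iter_partial l' f)
  end.

Definition smooth2 (f : R -> R -> R) : Prop :=
  forall l : list bool,
    (forall x y, ex_derive (fun t => iter_partial l f t y) x /\
                 ex_derive (fun t => iter_partial l f x t) y) /\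
    (forall x y, continuous (fun p : R * R => iter_partial l f (fst p) (snd p)) (x, y)).

Definition analytic_at_infinity (g : R -> R) : Prop :=
  exists (eps1 eps2 : R) (a b : nat -> R),
    0 < eps1 /\ 0 < eps2 /\
    (forall t, 0 < t < eps1 ->
       is_series (fun n => a (S n) * t ^ (S n)) (g (/ t)) /\
       ex_series (fun n => Rabs (a (S n) * t ^ (S n)))) /\
    (forall t, - eps2 < t < 0 ->
       is_series (fun n => b (S n) * t ^ (S n)) (g (/ t)) /\
       ex_series (fun n => Rabs (b (S n) * t ^ (S n)))).

Definition very_moderate_decrease (f : R -> R -> R) : Prop :=
  exists C, 0 < C /\ forall x y, 1 < norm2 x y -> Rabs (f x y) <= C / norm2 x y.

Definition moderate_decrease (f : R -> R -> R) : Prop :=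
  exists C, 0 < C /\ forall x y, 1 < norm2 x y -> Rabs (f x y) <= C / (norm2 x y) ^ 2.

Definition cond_i_iv (f : R -> R -> R) : Prop :=
  (forall x, analytic_at_infinity (fun y => f x y)) /\
  (forall y, analytic_at_infinity (fun x => f x y)) /\
  very_moderate_decrease f /\
  moderate_decrease (dx f) /\ moderate_decrease (dy f).

Definition zeros_localized (h : R -> R -> R) : Prop :=
  exists S0 B, forall s, S0 < Rabs s ->
    exists N M, 0 <= N /\ M - N <= B /\
      forall t, h s t = 0 -> (- M < t < - N \/ N < t < M).

Definition cond_v' (f : R -> R -> R) : Prop :=
  zeros_localized (fun x y => f x y) /\
  zeros_localized (fun x y => Derive (fun t => f x t) y) /\
  zeros_localized (fun x y => Derive (fun u => Derive (fun t => f x t) u) y) /\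
  zeros_localized (fun y x => f x y) /\
  zeros_localized (fun y x => Derive (fun t => f t y) x) /\
  zeros_localized (fun y x => Derive (fun u => Derive (fun t => f t y) u) x).

Definition quasi_normal (f : R -> R -> R) : Prop :=
  cond_i_iv f /\ cond_v' f.

Definition quasi_split_normal (f : R -> R -> R) : Prop :=
  cond_i_iv f /\
  exists (R0 : R) (f1 f2 : R -> R -> R),
    smooth2 f1 /\ smooth2 f2 /\ quasi_normal f1 /\ quasi_normal f2 /\
    forall x y, R0 < norm2 x y -> f x y = f1 x y + f2 x y.

(* Main.v *)
Require Import Defs.
From Stdlib Require Import Reals.
From Coquelicot Require Import Coquelicot.
From Stdlib Require Import Lra Classical List.
Open Scope R_scope.

Lemma cont_of_derive (u du : R -> R) x : is_derive u x (du x) -> continuous u x.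
Proof. intros H. apply (ex_derive_continuous (K:=R_AbsRing) (V:=R_NormedModule)). exists (du x). exact H. Qed.

Lemma ex_RInt_cont (f : R -> R) a b : (forall x, continuous f x) -> ex_RInt f a b.
Proof. intros H. apply (ex_RInt_continuous (V:=R_CompleteNormedModule)). intros; apply H. Qed.

Lemma ibp (u du v dv : R -> R) a b :
  (forall x, is_derive u x (du x)) -> (forall x, is_derive v x (dv x)) ->
  (forall x, continuous du x) -> (forall x, continuous dv x) ->
  RInt (fun x => u x * dv x) a b = u b * v b - u a * v a - RInt (fun x => du x * v x) a b.
Proof.
  intros Hu Hv Cu Cv.
  assert (Cu0 : forall x, continuous u x) by (intros; eapply cont_of_derive; apply Hu).
  assert (Cv0 : forall x, continuous v x) by (intros; eapply cont_of_derive; apply Hv).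
  assert (H := is_RInt_derive (fun x => u x * v x) (fun x => du x * v x + u x * dv x) a b).
  assert (H1 : is_RInt (fun x => du x * v x + u x * dv x) a b (u b * v b - u a * v a)).
  { apply H.
    - intros x _. apply (is_derive_mult u v x (du x) (dv x) (Hu x) (Hv x)).
      intros; simpl; apply Rmult_comm.
    - intros x _. apply (continuous_plus (fun x => du x * v x) (fun x => u x * dv x)).
      + apply (continuous_mult du v); auto.
      + apply (continuous_mult u dv); auto. }
  apply (is_RInt_unique (V:=R_CompleteNormedModule)) in H1.
  assert (E1 : ex_RInt (fun x => du x * v x) a b).
  { apply ex_RInt_cont. intros; apply (continuous_mult du v); auto. }
  assert (E2 : ex_RInt (fun x => u x * dv x) a b).
  { apply ex_RInt_cont. intros; apply (continuous_mult u dv); auto. }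
  pose proof (RInt_plus (V:=R_CompleteNormedModule) _ _ a b E1 E2) as H2.
  simpl in H2. unfold plus in H2; simpl in H2. rewrite H2 in H1. lra.
Qed.

Lemma cont_std (g : R -> R) : (forall x, continuous g x) -> continuity g.
Proof. intros H x. apply continuity_pt_filterlim. apply H. Qed.

Lemma sign_const (g : R -> R) a b : a <= b -> (forall x, continuous g x) ->
  (forall x, a < x < b -> g x <> 0) ->
  (forall x, a <= x <= b -> 0 <= g x) \/ (forall x, a <= x <= b -> g x <= 0).
Proof.
  intros Hab Hc Hz.
  destruct (classic (forall x, a <= x <= b -> 0 <= g x)) as [H|H]; [left; exact H|right].
  apply not_all_ex_not in H. destruct H as [p Hp].
  apply imply_to_and in Hp. destruct Hp as [Hp1 Hp2]. apply Rnot_le_lt in Hp2.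
  intros q Hq. apply Rnot_lt_le. intros Hq2.
  destruct (IVT_gen g p q 0 (cont_std g Hc)) as [z [Hz1 Hz2]].
  { unfold Rmin, Rmax; destruct (Rle_dec (g p) (g q)); lra. }
  assert (z <> p) by (intro; subst; lra).
  assert (z <> q) by (intro; subst; lra).
  apply (Hz z); auto.
  revert Hz1; unfold Rmin, Rmax; destruct (Rle_dec p q); intros; split; lra.
Qed.

Lemma RInt_deriv_c (g dg : R -> R) c a b : (forall x, is_derive g x (dg x)) -> (forall x, continuous dg x) ->
  RInt (fun x => c * dg x) a b = c * (g b - g a).
Proof.
  intros Hd Hc.
  assert (H := is_RInt_derive (V:=R_CompleteNormedModule) g dg a b (fun x _ => Hd x) (fun x _ => Hc x)).
  apply (is_RInt_unique (V:=R_CompleteNormedModule)) in H.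
  pose proof (RInt_scal (V:=R_CompleteNormedModule) dg a b c) as H2.
  simpl in H2. unfold scal in H2; simpl in H2; unfold mult in H2; simpl in H2.
  rewrite H2. 2:{ apply ex_RInt_cont; auto. } rewrite H. reflexivity.
Qed.

Lemma mono_bound (g dg S U : R -> R) L a b : a <= b ->
  (forall x, is_derive g x (dg x)) -> (forall x, continuous dg x) ->
  (forall x, a < x < b -> dg x <> 0) ->
  (forall x, is_derive U x (S x)) -> (forall x, continuous S x) ->
  (forall x, Rabs (U x) <= L) ->
  Rabs (RInt (fun x => g x * S x) a b) <= 2 * L * (Rabs (g a) + Rabs (g b)).
Proof.
  intros Hab Hg Hdg Hz HU HS HL.
  rewrite (ibp g dg U S a b Hg HU Hdg HS).
  assert (CU : forall x, continuous U x) by (intros; eapply cont_of_derive; apply HU).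
  assert (EX : ex_RInt (fun x => dg x * U x) a b).
  { apply ex_RInt_cont. intros; apply (continuous_mult dg U); auto. }
  assert (L0 : 0 <= L) by (specialize (HL a); pose proof (Rabs_pos (U a)); lra).
  assert (B : Rabs (RInt (fun x => dg x * U x) a b) <= L * Rabs (g b - g a)).
  { destruct (sign_const dg a b Hab Hdg Hz) as [P|N].
    - eapply Rle_trans. apply abs_RInt_le; auto.
      eapply Rle_trans. apply (RInt_le _ (fun x => L * dg x)); auto.
      + apply ex_RInt_cont. intros. apply (continuous_comp (fun x => dg x * U x) Rabs).
        apply (continuous_mult dg U); auto. apply continuous_Rabs.
      + apply ex_RInt_cont. intros. apply (continuous_mult (fun _ => L) dg); auto. apply continuous_const.
      + intros x Hx. rewrite Rabs_mult. rewrite (Rabs_right (dg x)) by (apply Rle_ge, P; lra).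
        rewrite Rmult_comm. apply Rmult_le_compat_r. apply P; lra. apply HL.
      + rewrite (RInt_deriv_c g dg L a b Hg Hdg). apply Rmult_le_compat_l; auto. apply Rle_abs.
    - eapply Rle_trans. apply abs_RInt_le; auto.
      eapply Rle_trans. apply (RInt_le _ (fun x => (-L) * dg x)); auto.
      + apply ex_RInt_cont. intros. apply (continuous_comp (fun x => dg x * U x) Rabs).
        apply (continuous_mult dg U); auto. apply continuous_Rabs.
      + apply ex_RInt_cont. intros. apply (continuous_mult (fun _ => -L) dg); auto. apply continuous_const.
      + intros x Hx. rewrite Rabs_mult. rewrite (Rabs_left1 (dg x)) by (apply N; lra).
        assert (0 <= - dg x) by (pose proof (N x); lra).
        pose proof (HL x). nra.
      + rewrite (RInt_deriv_c g dg (-L) a b Hg Hdg).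
        rewrite <- Rabs_Ropp. pose proof (Rle_abs (- (g b - g a))). nra. }
  pose proof (HL a). pose proof (HL b).
  pose proof (Rabs_triang_inv2 (g b) (g a)).
  assert (Rabs (g b - g a) <= Rabs (g a) + Rabs (g b)).
  { unfold Rminus. eapply Rle_trans. apply Rabs_triang. rewrite Rabs_Ropp. lra. }
  assert (Rabs (g b * U b) <= Rabs (g b) * L) by (rewrite Rabs_mult; apply Rmult_le_compat_l; auto; apply Rabs_pos).
  assert (Rabs (g a * U a) <= Rabs (g a) * L) by (rewrite Rabs_mult; apply Rmult_le_compat_l; auto; apply Rabs_pos).
  eapply Rle_trans. unfold Rminus. apply Rabs_triang. rewrite Rabs_Ropp.
  eapply Rle_trans. apply Rplus_le_compat_r. apply Rabs_triang. rewrite Rabs_Ropp.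
  nra.
Qed.

Definition clamp a b x := Rmax a (Rmin b x).

Lemma clamp_in a b x : a <= b -> a <= clamp a b x <= b.
Proof. intros; unfold clamp, Rmax, Rmin; repeat destruct Rle_dec; lra. Qed.
Lemma clamp_mono a b x y : a <= b -> x <= y -> clamp a b x <= clamp a b y /\ clamp a b y - clamp a b x <= y - x.
Proof. intros; unfold clamp, Rmax, Rmin; repeat destruct Rle_dec; lra. Qed.
Lemma clamp_lt a b x z : a <= b -> a < z -> z < clamp a b x -> z < x.
Proof. intros; revert H1; unfold clamp, Rmax, Rmin; repeat destruct Rle_dec; lra. Qed.
Lemma clamp_gt a b x z : a <= b -> z < b -> clamp a b x < z -> x < z.
Proof. intros; revert H1; unfold clamp, Rmax, Rmin; repeat destruct Rle_dec; lra. Qed.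

Lemma chasles (F : R -> R) x y z : (forall t, continuous F t) ->
  RInt F x z = RInt F x y + RInt F y z.
Proof.
  intros H. rewrite <- (RInt_Chasles (V:=R_CompleteNormedModule) F x y z); try apply ex_RInt_cont; auto.
Qed.

Lemma pieces (g dg S U : R -> R) L K Ls B N M a b : a <= b ->
  (forall x, is_derive g x (dg x)) -> (forall x, continuous dg x) ->
  (forall x, is_derive U x (S x)) -> (forall x, continuous S x) ->
  (forall x, Rabs (U x) <= L) -> (forall x, Rabs (S x) <= Ls) -> (forall x, Rabs (g x) <= K) ->
  0 <= N -> M - N <= B ->
  (forall x, dg x = 0 -> (- M < x < - N \/ N < x < M)) ->
  Rabs (RInt (fun x => g x * S x) a b) <= 12 * L * K + 2 * Rabs B * K * Ls.
Proof.
  intros Hab Hg Hdg HU HS HL HLs HK HN HB Hz.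
  assert (L0 : 0 <= L) by (specialize (HL a); pose proof (Rabs_pos (U a)); lra).
  assert (K0 : 0 <= K) by (specialize (HK a); pose proof (Rabs_pos (g a)); lra).
  assert (Ls0 : 0 <= Ls) by (specialize (HLs a); pose proof (Rabs_pos (S a)); lra).
  assert (Cg : forall x, continuous g x) by (intros; eapply cont_of_derive; apply Hg).
  assert (CF : forall x, continuous (fun x => g x * S x) x) by (intros; apply (continuous_mult g S); auto).
  assert (MB : forall p q, p <= q -> (forall x, p < x < q -> dg x <> 0) ->
     Rabs (RInt (fun x => g x * S x) p q) <= 4 * L * K).
  { intros p q Hpq Hnz. eapply Rle_trans. apply (mono_bound g dg S U L p q); auto.
    pose proof (HK p); pose proof (HK q). nra. }
  assert (WB : forall p q, p <= q -> q - p <= B -> Rabs (RInt (fun x => g x * S x) p q) <= B * K * Ls).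
  { intros p q Hpq Hl. eapply Rle_trans. apply abs_RInt_le_const; auto. apply ex_RInt_cont; auto.
    intros t _. rewrite Rabs_mult. apply Rmult_le_compat; auto using Rabs_pos.
    assert (0 <= K * Ls) by nra. 
    replace (B * K * Ls) with (B * (K * Ls)) by ring. apply Rmult_le_compat_r; lra. }
  destruct (Rlt_le_dec M N) as [HMN|HMN].
  { eapply Rle_trans. apply MB; auto. intros x Hx Hd. destruct (Hz x Hd); lra.
    pose proof (Rabs_pos B). assert (0 <= Rabs B * K * Ls) by (apply Rmult_le_pos; [apply Rmult_le_pos|]; lra). nra. }
  rewrite (Rabs_right B) by lra.
  pose proof (clamp_mono a b (-M) (-N) Hab ltac:(lra)) as [O1 W1].
  pose proof (clamp_mono a b (-N) N Hab ltac:(lra)) as [O2 _].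
  pose proof (clamp_mono a b N M Hab ltac:(lra)) as [O3 W3].
  pose proof (clamp_in a b (-M) Hab). pose proof (clamp_in a b M Hab).
  rewrite (chasles (fun x : R => g x * S x) a (clamp a b (-M)) b CF).
  rewrite (chasles (fun x : R => g x * S x) (clamp a b (-M)) (clamp a b (-N)) b CF).
  rewrite (chasles (fun x : R => g x * S x) (clamp a b (-N)) (clamp a b N) b CF).
  rewrite (chasles (fun x : R => g x * S x) (clamp a b N) (clamp a b M) b CF).
  assert (P1 : Rabs (RInt (fun x => g x * S x) a (clamp a b (-M))) <= 4 * L * K).
  { apply MB. lra. intros x Hx Hd. pose proof (clamp_lt a b (-M) x Hab ltac:(lra) ltac:(lra)).
    destruct (Hz x Hd); lra. }
  assert (P2 : Rabs (RInt (fun x => g x * S x) (clamp a b (-M)) (clamp a b (-N))) <= B * K * Ls).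
  { apply WB; lra. }
  assert (P3 : Rabs (RInt (fun x => g x * S x) (clamp a b (-N)) (clamp a b N)) <= 4 * L * K).
  { apply MB. lra. intros x Hx Hd.
    pose proof (clamp_in a b (-N) Hab). pose proof (clamp_in a b N Hab).
    pose proof (clamp_lt a b N x Hab ltac:(lra) ltac:(lra)).
    pose proof (clamp_gt a b (-N) x Hab ltac:(lra) ltac:(lra)).
    destruct (Hz x Hd); lra. }
  assert (P4 : Rabs (RInt (fun x => g x * S x) (clamp a b N) (clamp a b M)) <= B * K * Ls).
  { apply WB; lra. }
  assert (P5 : Rabs (RInt (fun x => g x * S x) (clamp a b M) b) <= 4 * L * K).
  { apply MB. lra. intros x Hx Hd. pose proof (clamp_gt a b M x Hab ltac:(lra) ltac:(lra)).
    destruct (Hz x Hd); lra. }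
  match goal with |- Rabs (?A + (?B + (?C + (?D + ?E)))) <= _ =>
    pose proof (Rabs_triang A (B + (C + (D + E))));
    pose proof (Rabs_triang B (C + (D + E)));
    pose proof (Rabs_triang C (D + E));
    pose proof (Rabs_triang D E) end.
  lra.
Qed.

Lemma ball_R x e y : ball (M:=R_UniformSpace) x e y <-> Rabs (y - x) < e.
Proof. unfold ball; simpl. unfold AbsRing_ball. unfold abs, minus, plus, opp; simpl. tauto. Qed.

Lemma norm2_sq t s : norm2 t s ^ 2 = t ^ 2 + s ^ 2.
Proof. unfold norm2. rewrite <- Rsqr_pow2. rewrite Rsqr_sqrt. ring. nra. Qed.

Lemma norm2_ge_r t s : Rabs s <= norm2 t s.
Proof. unfold norm2. rewrite <- sqrt_Rsqr_abs. apply sqrt_le_1_alt. unfold Rsqr. nra. Qed.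
Lemma norm2_ge_l t s : Rabs t <= norm2 t s.
Proof. unfold norm2. rewrite <- sqrt_Rsqr_abs. apply sqrt_le_1_alt. unfold Rsqr. nra. Qed.
Lemma norm2_sym t s : norm2 t s = norm2 s t.
Proof. unfold norm2. f_equal. ring. Qed.

Lemma inv_sq_int c a b : a <= b -> (0 < a \/ b < 0) ->
  RInt (fun t => c / t ^ 2) a b = c * (1 / a - 1 / b).
Proof.
  intros Hab H0.
  assert (Hnz : forall x, Rmin a b <= x <= Rmax a b -> x <> 0).
  { intros x Hx. rewrite Rmin_left, Rmax_right in Hx by lra. intro; subst; lra. }
  assert (H := is_RInt_derive (V:=R_CompleteNormedModule) (fun t => - c / t) (fun t => c / t ^ 2) a b).
  assert (D : forall x, Rmin a b <= x <= Rmax a b -> is_derive (fun t => - c / t) x (c / x ^ 2)).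
  { intros x Hx. specialize (Hnz x Hx). auto_derive. auto. field. auto. }
  apply (is_RInt_unique (V:=R_CompleteNormedModule)) in H; auto.
  - rewrite H. simpl. unfold minus, plus, opp; simpl. field.
    split; intro; subst; lra.
  - intros x Hx. apply (ex_derive_continuous (K:=R_AbsRing) (V:=R_NormedModule)).
    specialize (Hnz x Hx). auto_derive. auto.
Qed.

Lemma tail_bound (g v : R -> R) s C Lv a b : a <= b -> (1 <= a \/ b <= -1) ->
  (forall x, continuous g x) -> (forall x, continuous v x) ->
  (forall x, Rabs (v x) <= Lv) ->
  (forall t, 1 < norm2 t s -> Rabs (g t) <= C / (norm2 t s) ^ 2) -> 0 < C ->
  Rabs (RInt (fun t => g t * v t) a b) <= (C * Lv) * (1 / a - 1 / b).
Proof.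
  intros Hab H1 Cg Cv HLv Hg HC.
  assert (Lv0 : 0 <= Lv) by (specialize (HLv a); pose proof (Rabs_pos (v a)); lra).
  rewrite <- inv_sq_int by lra.
  eapply Rle_trans. apply abs_RInt_le; auto. apply ex_RInt_cont; intros; apply (continuous_mult g v); auto.
  apply RInt_le; auto.
  - apply ex_RInt_cont. intros. apply (continuous_comp (fun x => g x * v x) Rabs).
    apply (continuous_mult g v); auto. apply continuous_Rabs.
  - apply (ex_RInt_continuous (V:=R_CompleteNormedModule)). intros x Hx.
    rewrite Rmin_left, Rmax_right in Hx by lra.
    apply (ex_derive_continuous (K:=R_AbsRing) (V:=R_NormedModule)).
    assert (x <> 0) by lra. auto_derive. auto.
  - intros x Hx. assert (Hx1 : 1 < Rabs x).
    { destruct H1; [rewrite Rabs_right|rewrite Rabs_left]; lra. }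
    pose proof (norm2_ge_l x s). pose proof (norm2_sq x s).
    assert (1 < norm2 x s) by lra.
    specialize (Hg x ltac:(lra)). rewrite Rabs_mult.
    assert (Rabs (g x) <= C / x ^ 2).
    { eapply Rle_trans. apply Hg. unfold Rdiv. apply Rmult_le_compat_l. lra.
      apply Rinv_le_contravar. assert (0 < x^2). { rewrite <- Rsqr_pow2. apply Rsqr_pos_lt. lra. } lra.
      nra. }
    assert (0 < x^2). { rewrite <- Rsqr_pow2. apply Rsqr_pos_lt. intro; subst; rewrite Rabs_R0 in Hx1; lra. }
    assert (0 <= C / x^2). { unfold Rdiv. apply Rmult_le_pos. lra. apply Rlt_le, Rinv_0_lt_compat. lra. }
    replace (C * Lv / x ^ 2) with ((C / x^2) * Lv) by (field; lra).
    apply Rmult_le_compat; auto using Rabs_pos.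
Qed.

Lemma lim_Q (g v : R -> R) s C Lv :
  (forall x, continuous g x) -> (forall x, continuous v x) ->
  (forall x, Rabs (v x) <= Lv) ->
  (forall t, 1 < norm2 t s -> Rabs (g t) <= C / (norm2 t s) ^ 2) -> 0 < C ->
  exists l, filterlim (fun r => RInt (fun t => g t * v t) (-r) r) (Rbar_locally p_infty) (locally l).
Proof.
  intros Cg Cv HLv Hg HC.
  assert (Lv0 : 0 <= Lv) by (specialize (HLv 0); pose proof (Rabs_pos (v 0)); lra).
  assert (CF : forall x, continuous (fun t => g t * v t) x) by (intros; apply (continuous_mult g v); auto).
  assert (T : forall r0 u, 1 <= r0 <= u ->
     Rabs (RInt (fun t => g t * v t) (-u) u - RInt (fun t => g t * v t) (-r0) r0) <= 2 * (C * Lv) * (1 / r0)).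
  { intros r0 u Hr.
    rewrite (chasles (fun t => g t * v t) (-u) (-r0) u CF).
    rewrite (chasles (fun t => g t * v t) (-r0) r0 u CF).
    pose proof (tail_bound g v s C Lv (-u) (-r0) ltac:(lra) ltac:(lra) Cg Cv HLv Hg HC).
    pose proof (tail_bound g v s C Lv r0 u ltac:(lra) ltac:(lra) Cg Cv HLv Hg HC).
    match goal with |- Rabs (?A + (?B + ?D) - ?B) <= _ =>
      replace (A + (B + D) - B) with (A + D) by ring; pose proof (Rabs_triang A D) end.
    assert (0 < 1 / u) by (apply Rdiv_lt_0_compat; lra).
    assert (0 <= C * Lv) by nra.
    replace (1 / - u - 1 / - r0) with (1 / r0 - 1 / u) in * by (field; lra).
    nra. }
  apply (filterlim_locally_cauchy (F := Rbar_locally p_infty)).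
  intros eps.
  set (r0 := Rmax 1 (4 * C * Lv / eps + 1)).
  assert (Hr0 : 1 <= r0 /\ 4 * C * Lv / eps + 1 <= r0) by (split; apply Rmax_l || apply Rmax_r).
  exists (fun u => r0 <= u). split.
  - exists r0. intros; lra.
  - intros u w Hu Hw. apply ball_R.
    pose proof (T r0 u ltac:(lra)). pose proof (T r0 w ltac:(lra)).
    assert (E : 4 * (C * Lv) * (1 / r0) < eps).
    { pose proof (cond_pos eps). 
      assert (4 * C * Lv < eps * r0).
      { assert (4 * C * Lv = eps * (4 * C * Lv / eps)) by (field; lra). nra. }
      apply (Rmult_lt_reg_r r0). lra. replace (4 * (C * Lv) * (1 / r0) * r0) with (4 * C * Lv) by (field; lra). lra. }
    match goal with |- Rabs (?W - ?U) < _ =>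
      match type of H with Rabs (?U' - ?B) <= _ =>
        replace (W - U) with ((W - B) - (U' - B)) by ring;
        pose proof (Rabs_triang (W - B) (- (U' - B))) end end.
    rewrite Rabs_Ropp in *. unfold Rminus at 1. lra.
Qed.

Lemma lim_le_bound (Q : R -> R) l B : filterlim Q (Rbar_locally p_infty) (locally l) ->
  (exists M, forall r, M < r -> Rabs (Q r) <= B) -> Rabs l <= B.
Proof.
  intros HQ [M HM]. apply Rnot_lt_le. intros Hl.
  assert (He : 0 < Rabs l - B) by lra.
  specialize (HQ (ball l (mkposreal _ He)) (locally_ball l (mkposreal _ He))).
  destruct HQ as [M' HM'].
  set (r := Rmax M M' + 1).
  assert (M < r /\ M' < r) as [H1 H2] by (unfold r; split; [pose proof (Rmax_l M M')|pose proof (Rmax_r M M')]; lra).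
  specialize (HM r H1). specialize (HM' r H2). pose proof (proj1 (ball_R _ _ _) HM') as HM2. simpl in HM2.
  pose proof (Rabs_triang_inv l (l - Q r)). replace (l - (l - Q r)) with (Q r) in H by ring.
  rewrite Rabs_minus_sym in HM2. lra.
Qed.

Lemma lim_P (phi g v w : R -> R) s Cv Lv l :
  (forall x, is_derive phi x (g x)) -> (forall x, continuous g x) ->
  (forall x, is_derive v x (w x)) -> (forall x, continuous w x) ->
  (forall x, Rabs (v x) <= Lv) ->
  (forall t, 1 < norm2 t s -> Rabs (phi t) <= Cv / norm2 t s) -> 0 < Cv ->
  filterlim (fun r => RInt (fun t => g t * v t) (-r) r) (Rbar_locally p_infty) (locally l) ->
  is_lim (fun r => RInt (fun t => phi t * w t) (-r) r) p_infty (- l).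
Proof.
  intros Hphi Cg Hv Cw HLv Hd HCv HQ.
  assert (Lv0 : 0 <= Lv) by (specialize (HLv 0); pose proof (Rabs_pos (v 0)); lra).
  apply is_lim_spec. intros eps. simpl.
  pose proof (cond_pos eps) as Heps.
  assert (He2 : 0 < eps / 2) by lra.
  destruct (HQ (ball l (mkposreal _ He2)) (locally_ball l (mkposreal _ He2))) as [M1 HM1].
  set (M := Rmax M1 (Rmax 1 (4 * Cv * Lv / eps + 1))).
  exists M. intros r Hr.
  assert (M1 < r /\ 1 < r /\ 4 * Cv * Lv / eps + 1 < r) as [R1 [R2 R3]].
  { unfold M in Hr. pose proof (Rmax_l M1 (Rmax 1 (4 * Cv * Lv / eps + 1))).
    pose proof (Rmax_r M1 (Rmax 1 (4 * Cv * Lv / eps + 1))).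
    pose proof (Rmax_l 1 (4 * Cv * Lv / eps + 1)). pose proof (Rmax_r 1 (4 * Cv * Lv / eps + 1)). lra. }
  specialize (HM1 r R1). pose proof (proj1 (ball_R _ _ _) HM1) as HM2. simpl in HM2.
  rewrite (ibp phi g v w (-r) r Hphi Hv Cg Cw).
  assert (B : forall t, 1 < Rabs t -> Rabs (phi t * v t) <= Cv * Lv / Rabs t).
  { intros t Ht. pose proof (norm2_ge_l t s).
    specialize (Hd t ltac:(lra)). rewrite Rabs_mult.
    assert (Cv / norm2 t s <= Cv / Rabs t).
    { unfold Rdiv. apply Rmult_le_compat_l. lra. apply Rinv_le_contravar; lra. }
    assert (0 <= Cv / Rabs t) by (unfold Rdiv; apply Rmult_le_pos; [lra| apply Rlt_le, Rinv_0_lt_compat; lra]).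
    replace (Cv * Lv / Rabs t) with (Cv / Rabs t * Lv) by (field; lra).
    apply Rmult_le_compat; auto using Rabs_pos. lra. }
  assert (Ra : Rabs r = r) by (apply Rabs_right; lra).
  assert (Rb : Rabs (- r) = r) by (rewrite Rabs_Ropp; auto).
  pose proof (B r ltac:(lra)) as B1. pose proof (B (-r) ltac:(lra)) as B2.
  rewrite Ra in B1. rewrite Rb in B2.
  assert (E : Cv * Lv / r < eps / 4).
  { assert (4 * Cv * Lv < eps * r).
    { assert (4 * Cv * Lv = eps * (4 * Cv * Lv / eps)) by (field; lra). nra. }
    apply (Rmult_lt_reg_r r). lra. replace (Cv * Lv / r * r) with (Cv * Lv) by (field; lra). lra. }
  set (A1 := phi r * v r) in *. set (A2 := phi (- r) * v (- r)) in *.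
  set (Q := RInt (fun t => g t * v t) (-r) r) in *.
  replace (A1 - A2 - Q - - l) with (A1 - A2 - (Q - l)) by ring.
  assert (TT : Rabs (A1 - A2 - (Q - l)) <= Rabs A1 + Rabs A2 + Rabs (Q - l)).
  { pose proof (Rabs_triang (A1 - A2) (- (Q - l))). rewrite Rabs_Ropp in H.
    pose proof (Rabs_triang A1 (- A2)). rewrite Rabs_Ropp in H0.
    replace (A1 - A2 - (Q - l)) with ((A1 - A2) + - (Q - l)) by ring.
    replace (A1 - A2) with (A1 + - A2) in * by ring. lra. }
  apply (Rle_lt_trans _ _ _ TT). lra.
Qed.

Definition good (h : R -> R -> R) : Prop :=
  (forall s t, ex_derive (h s) t) /\
  (forall s t, ex_derive (fun u => Derive (h s) u) t) /\
  (forall s t, continuous (fun u => Derive (fun x => Derive (h s) x) u) t) /\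
  (exists C, 0 < C /\ forall s t, 1 < norm2 t s -> Rabs (Derive (h s) t) <= C / (norm2 t s)^2) /\
  zeros_localized (fun s t => Derive (fun u => Derive (h s) u) t).

Lemma decay_sq (g : R -> R) s C t : 0 < C -> 1 < Rabs s ->
  (1 < norm2 t s -> Rabs (g t) <= C / (norm2 t s)^2) -> Rabs (g t) <= C / s ^ 2.
Proof.
  intros HC Hs H. pose proof (norm2_ge_r t s). pose proof (norm2_sq t s).
  eapply Rle_trans. apply H. lra.
  assert (0 < s ^ 2). { rewrite <- Rsqr_pow2. apply Rsqr_pos_lt. intro; subst; rewrite Rabs_R0 in Hs; lra. }
  unfold Rdiv. apply Rmult_le_compat_l. lra. apply Rinv_le_contravar. lra. nra.
Qed.

Lemma good_bound h S U L Ls : good h ->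
  (forall x, is_derive U x (S x)) -> (forall x, continuous S x) ->
  (forall x, Rabs (U x) <= L) -> (forall x, Rabs (S x) <= Ls) ->
  exists K S1, forall s, S1 < Rabs s -> forall a b, a <= b ->
    Rabs (RInt (fun t => Derive (h s) t * S t) a b) <= K / s ^ 2.
Proof.
  intros [Hd [Hdd [Hc [[C [HC HCm]] [S0 [B HZ]]]]]] HU HS HL HLs.
  exists (12 * L * C + 2 * Rabs B * C * Ls), (Rmax S0 1).
  intros s Hs a b Hab.
  assert (S0 < Rabs s /\ 1 < Rabs s) as [Hs0 Hs1] by (pose proof (Rmax_l S0 1); pose proof (Rmax_r S0 1); lra).
  destruct (HZ s Hs0) as [N [M [HN [HMN HZs]]]].
  assert (0 < s ^ 2). { rewrite <- Rsqr_pow2. apply Rsqr_pos_lt. intro; subst; rewrite Rabs_R0 in Hs1; lra. }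
  eapply Rle_trans.
  apply (pieces (Derive (h s)) (fun u => Derive (fun x => Derive (h s) x) u) S U L (C / s ^ 2) Ls B N M a b Hab); auto.
  - intros x. apply (Derive_correct (fun u => Derive (h s) u)). apply Hdd.
  - intros x. apply (decay_sq (Derive (h s)) s C x HC Hs1). apply HCm.
  - right. assert (s <> 0) by (intro; subst; rewrite Rabs_R0 in Hs1; lra). field. auto.
Qed.

Lemma mid_bound (g v : R -> R) s C Lv r : 1 < Rabs s -> 1 <= r ->
  (forall x, continuous g x) -> (forall x, continuous v x) ->
  (forall x, Rabs (v x) <= Lv) ->
  (forall t, 1 < norm2 t s -> Rabs (g t) <= C / (norm2 t s) ^ 2) -> 0 < C ->
  Rabs (RInt (fun t => g t * v t) (-r) r) <= 4 * C * Lv.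
Proof.
  intros Hs Hr Cg Cv HLv Hg HC.
  assert (Lv0 : 0 <= Lv) by (specialize (HLv 0); pose proof (Rabs_pos (v 0)); lra).
  assert (CF : forall x, continuous (fun t => g t * v t) x) by (intros; apply (continuous_mult g v); auto).
  rewrite (chasles (fun t => g t * v t) (-r) (-1) r CF).
  rewrite (chasles (fun t => g t * v t) (-1) 1 r CF).
  pose proof (tail_bound g v s C Lv (-r) (-1) ltac:(lra) ltac:(lra) Cg Cv HLv Hg HC) as T1.
  pose proof (tail_bound g v s C Lv 1 r ltac:(lra) ltac:(lra) Cg Cv HLv Hg HC) as T2.
  assert (T3 : Rabs (RInt (fun t => g t * v t) (-1) 1) <= (1 - -1) * (C * Lv)).
  { apply abs_RInt_le_const. lra. apply ex_RInt_cont; auto.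
    intros t _. rewrite Rabs_mult. apply Rmult_le_compat; auto using Rabs_pos.
    eapply Rle_trans. apply (decay_sq g s C t HC Hs (Hg t)).
    assert (1 < s ^ 2). { pose proof (Rabs_pos s). rewrite <- (pow2_abs s). nra. }
    unfold Rdiv. rewrite <- (Rmult_1_r C) at 2. apply Rmult_le_compat_l. lra.
    rewrite <- Rinv_1. apply Rinv_le_contravar; lra. }
  assert (0 < 1 / r) by (apply Rdiv_lt_0_compat; lra).
  assert (1 / r <= 1) by (unfold Rdiv; rewrite Rmult_1_l; rewrite <- Rinv_1; apply Rinv_le_contravar; lra).
  assert (0 <= C * Lv) by nra.
  replace (1 / -r - 1 / -1) with (1 - 1 / r) in T1 by (field; lra).
  match goal with |- Rabs (?A + (?B + ?D)) <= _ =>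
    pose proof (Rabs_triang A (B + D)); pose proof (Rabs_triang B D) end.
  nra.
Qed.

Lemma core (h : R -> R -> R) (w v U : R -> R) Lv LU :
  (forall s t, ex_derive (h s) t) ->
  (forall s t, ex_derive (fun u => Derive (h s) u) t) ->
  (exists C, 0 < C /\ forall s t, 1 < norm2 t s -> Rabs (h s t) <= C / norm2 t s) ->
  (exists C, 0 < C /\ forall s t, 1 < norm2 t s -> Rabs (Derive (h s) t) <= C / (norm2 t s)^2) ->
  (good h \/ exists R0 h1 h2, good h1 /\ good h2 /\ forall s t, R0 < Rabs s -> h s t = h1 s t + h2 s t) ->
  (forall x, is_derive v x (w x)) -> (forall x, is_derive U x (v x)) -> (forall x, continuous w x) ->
  (forall x, Rabs (v x) <= Lv) -> (forall x, Rabs (U x) <= LU) ->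
  exists Fl : R -> R,
    (forall s, is_lim (fun r => RInt (fun t => h s t * w t) (-r) r) p_infty (Fl s)) /\
    (exists C, 0 < C /\ forall s, 1 < Rabs s -> Rabs (Fl s) <= C / s ^ 2).
Proof.
  intros Hd Hdd [Cv [HCv HV]] [Cm [HCm HM]] Hsplit Hv HU Cw HLv HLU.
  assert (Cv' : forall x, continuous v x) by (intros; eapply cont_of_derive; apply Hv).
  assert (Cg : forall s x, continuous (Derive (h s)) x).
  { intros s x. apply (ex_derive_continuous (K:=R_AbsRing) (V:=R_NormedModule)). apply Hdd. }
  assert (KEY : forall s, exists l,
     filterlim (fun r => RInt (fun t => Derive (h s) t * v t) (-r) r) (Rbar_locally p_infty) (locally l) /\
     is_lim (fun r => RInt (fun t => h s t * w t) (-r) r) p_infty (- l)).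
  { intros s. destruct (lim_Q (Derive (h s)) v s Cm Lv (Cg s) Cv' HLv (HM s) HCm) as [l Hl].
    exists l. split; auto.
    apply (lim_P (h s) (Derive (h s)) v w s Cv Lv l); auto.
    intros x. apply Derive_correct. apply Hd. }
  assert (LARGE : exists K S1, forall s, S1 < Rabs s -> forall r, 0 <= r ->
     Rabs (RInt (fun t => Derive (h s) t * v t) (-r) r) <= K / s ^ 2).
  { destruct Hsplit as [G | [R0 [h1 [h2 [G1 [G2 E]]]]]].
    - destruct (good_bound h v U LU Lv G HU Cv' HLU HLv) as [K [S1 HK]].
      exists K, S1. intros s Hs r Hr. apply HK; auto. lra.
    - destruct (good_bound h1 v U LU Lv G1 HU Cv' HLU HLv) as [K1 [S1 HK1]].
      destruct (good_bound h2 v U LU Lv G2 HU Cv' HLU HLv) as [K2 [S2 HK2]].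
      exists (K1 + K2), (Rmax R0 (Rmax S1 S2)). intros s Hs r Hr.
      pose proof (Rmax_l R0 (Rmax S1 S2)). pose proof (Rmax_r R0 (Rmax S1 S2)).
      pose proof (Rmax_l S1 S2). pose proof (Rmax_r S1 S2).
      destruct G1 as [Hd1 [Hdd1 _]]. destruct G2 as [Hd2 [Hdd2 _]].
      assert (ED : forall t, Derive (h s) t = Derive (h1 s) t + Derive (h2 s) t).
      { intros t. rewrite (Derive_ext (h s) (fun x => h1 s x + h2 s x)).
        apply Derive_plus; auto. intros; apply E; lra. }
      rewrite (RInt_ext (fun t => Derive (h s) t * v t)
                 (fun t => Derive (h1 s) t * v t + Derive (h2 s) t * v t))
        by (intros; rewrite ED; apply Rmult_plus_distr_r).
      assert (RP : RInt (fun t => Derive (h1 s) t * v t + Derive (h2 s) t * v t) (-r) r =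
                   RInt (fun t => Derive (h1 s) t * v t) (-r) r + RInt (fun t => Derive (h2 s) t * v t) (-r) r).
      { apply (RInt_plus (V:=R_CompleteNormedModule)).
        - apply ex_RInt_cont. intros. apply (continuous_mult (Derive (h1 s)) v); auto.
          apply (ex_derive_continuous (K:=R_AbsRing) (V:=R_NormedModule)). apply Hdd1.
        - apply ex_RInt_cont. intros. apply (continuous_mult (Derive (h2 s)) v); auto.
          apply (ex_derive_continuous (K:=R_AbsRing) (V:=R_NormedModule)). apply Hdd2. }
      rewrite RP.
      pose proof (HK1 s ltac:(lra) (-r) r ltac:(lra)). pose proof (HK2 s ltac:(lra) (-r) r ltac:(lra)).
      eapply Rle_trans. apply Rabs_triang.
      replace ((K1 + K2) / s ^ 2) with (K1 / s^2 + K2 / s^2) by (unfold Rdiv; ring). lra. }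
  destruct LARGE as [K [S1 HK]].
  exists (fun s => real (Lim (fun r => RInt (fun t => h s t * w t) (-r) r) p_infty)).
  split.
  - intros s. destruct (KEY s) as [l [_ Hl]]. rewrite (is_lim_unique _ _ _ Hl). simpl. exact Hl.
  - set (S2 := Rmax S1 1).
    assert (0 <= Lv) by (specialize (HLv 0); pose proof (Rabs_pos (v 0)); lra).
    exists (Rabs K + 4 * Cm * Lv * S2 ^ 2 + 1). split.
    { pose proof (Rabs_pos K). assert (0 <= 4 * Cm * Lv * S2^2). 
      { apply Rmult_le_pos. nra. apply pow2_ge_0. } lra. }
    intros s Hs. destruct (KEY s) as [l [Hq Hl]]. rewrite (is_lim_unique _ _ _ Hl). simpl.
    rewrite Rabs_Ropp.
    assert (s2 : 1 < s ^ 2). { pose proof (Rabs_pos s). rewrite <- (pow2_abs s). nra. }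
    assert (0 <= 4 * Cm * Lv * S2^2). { apply Rmult_le_pos. nra. apply pow2_ge_0. }
    destruct (Rlt_le_dec S1 (Rabs s)) as [Hbig|Hsmall].
    + eapply Rle_trans. apply (lim_le_bound _ l (K / s ^ 2) Hq). exists 0. intros r Hr. apply HK; auto. lra.
      unfold Rdiv. apply Rmult_le_compat_r. apply Rlt_le, Rinv_0_lt_compat. lra.
      pose proof (Rle_abs K). lra.
    + eapply Rle_trans. apply (lim_le_bound _ l (4 * Cm * Lv) Hq). exists 1. intros r Hr.
      apply (mid_bound (Derive (h s)) v s Cm Lv r Hs ltac:(lra) (Cg s) Cv' HLv (HM s) HCm).
      assert (s ^ 2 <= S2 ^ 2).
      { rewrite <- (pow2_abs s). pose proof (Rmax_l S1 1). pose proof (Rabs_pos s). 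
        fold S2 in H1. simpl. nra. }
      apply (Rmult_le_reg_r (s ^ 2)). lra.
      change (s * (s * 1)) with (s ^ 2). change (S2 * (S2 * 1)) with (S2 ^ 2).
      replace ((Rabs K + 4 * Cm * Lv * S2 ^ 2 + 1) / s ^ 2 * s ^ 2) with (Rabs K + 4 * Cm * Lv * S2 ^ 2 + 1) by (field; intro; subst; rewrite Rabs_R0 in Hs; lra).
      pose proof (Rabs_pos K). assert (HH : 0 <= 4 * Cm * Lv) by nra. assert (HS : s ^ 2 <= S2 ^ 2) by assumption. pose proof (Rmult_le_compat_l _ _ _ HH HS). lra.
Qed.

Lemma sm_cont1 f l s t : smooth2 f -> continuous (fun u => iter_partial l f u s) t.
Proof.
  intros Hs. destruct (Hs l) as [_ Hc].
  apply (continuous_comp_2 (fun u : R => u) (fun _ : R => s) (iter_partial l f) t).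
  apply continuous_id. apply continuous_const. apply Hc.
Qed.
Lemma sm_cont2 f l s t : smooth2 f -> continuous (fun u => iter_partial l f s u) t.
Proof.
  intros Hs. destruct (Hs l) as [_ Hc].
  apply (continuous_comp_2 (fun _ : R => s) (fun u : R => u) (iter_partial l f) t).
  apply continuous_const. apply continuous_id. apply Hc.
Qed.

Lemma goodF f : smooth2 f -> quasi_normal f -> good (fun s t => f t s).
Proof.
  intros Hs [[_ [_ [_ [[C [HC HM]] _]]]] [_ [_ [_ [_ [_ Z]]]]]].
  split; [|split; [|split; [|split]]].
  - intros s t. exact (proj1 (proj1 (Hs nil) t s)).
  - intros s t. exact (proj1 (proj1 (Hs (true :: nil)) t s)).
  - intros s t. exact (sm_cont1 f (true :: true :: nil) s t Hs).
  - exists C. split; [auto|]. intros s t H. exact (HM t s H).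
  - exact Z.
Qed.

Lemma goodG f : smooth2 f -> quasi_normal f -> good (fun s t => f s t).
Proof.
  intros Hs [[_ [_ [_ [_ [C [HC HM]]]]]] [_ [_ [Z _]]]].
  split; [|split; [|split; [|split]]].
  - intros s t. exact (proj2 (proj1 (Hs nil) s t)).
  - intros s t. exact (proj2 (proj1 (Hs (false :: nil)) s t)).
  - intros s t. exact (sm_cont2 f (false :: false :: nil) s t Hs).
  - exists C. split; [auto|]. intros s t H. rewrite norm2_sym in *. exact (HM s t H).
  - exact Z.
Qed.

Lemma sqrt_sum_bound a b C1 C2 y : Rabs a <= C1 / y ^ 2 -> Rabs b <= C2 / y ^ 2 ->
  sqrt (a ^ 2 + b ^ 2) <= (C1 + C2) / y ^ 2.
Proof.
  intros Ha Hb. eapply Rle_trans with (Rabs a + Rabs b).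
  - rewrite <- (sqrt_Rsqr (Rabs a + Rabs b)) by (pose proof (Rabs_pos a); pose proof (Rabs_pos b); lra).
    apply sqrt_le_1_alt. unfold Rsqr. rewrite <- (pow2_abs a), <- (pow2_abs b).
    pose proof (Rabs_pos a); pose proof (Rabs_pos b). nra.
  - unfold Rdiv in *. lra.
Qed.

Lemma trig1 k : k <> 0 ->
  (forall x, is_derive (fun t => sin (k * t) / k) x (cos (k * x))) /\
  (forall x, is_derive (fun t => - cos (k * t) / k ^ 2) x (sin (k * x) / k)) /\
  (forall x, continuous (fun t => cos (k * t)) x) /\
  (forall x, Rabs (sin (k * x) / k) <= 1 / Rabs k) /\
  (forall x, Rabs (- cos (k * x) / k ^ 2) <= 1 / k ^ 2).
Proof.
  intros Hk. split; [|split; [|split; [|split]]].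
  - intros x. auto_derive. auto. field. auto.
  - intros x. auto_derive. auto. field. auto.
  - intros x. apply (ex_derive_continuous (K:=R_AbsRing) (V:=R_NormedModule)). auto_derive. auto.
  - intros x. unfold Rdiv. rewrite Rabs_mult, Rabs_inv. apply Rmult_le_compat_r.
    apply Rlt_le, Rinv_0_lt_compat, Rabs_pos_lt; auto. apply Rabs_le, SIN_bound.
  - intros x. unfold Rdiv. rewrite Rabs_mult, Rabs_inv, Rabs_Ropp. rewrite (Rabs_right (k^2)).
    apply Rmult_le_compat_r. apply Rlt_le, Rinv_0_lt_compat. apply pow2_gt_0; auto.
    apply Rabs_le, COS_bound. apply Rle_ge, pow2_ge_0.
Qed.

Lemma trig2 k : k <> 0 ->
  (forall x, is_derive (fun t => cos (k * t) / k) x (- sin (k * x))) /\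
  (forall x, is_derive (fun t => sin (k * t) / k ^ 2) x (cos (k * x) / k)) /\
  (forall x, continuous (fun t => - sin (k * t)) x) /\
  (forall x, Rabs (cos (k * x) / k) <= 1 / Rabs k) /\
  (forall x, Rabs (sin (k * x) / k ^ 2) <= 1 / k ^ 2).
Proof.
  intros Hk. split; [|split; [|split; [|split]]].
  - intros x. auto_derive. auto. field. auto.
  - intros x. auto_derive. auto. field. auto.
  - intros x. apply (ex_derive_continuous (K:=R_AbsRing) (V:=R_NormedModule)). auto_derive. auto.
  - intros x. unfold Rdiv. rewrite Rabs_mult, Rabs_inv. apply Rmult_le_compat_r.
    apply Rlt_le, Rinv_0_lt_compat, Rabs_pos_lt; auto. apply Rabs_le, COS_bound.
  - intros x. unfold Rdiv. rewrite Rabs_mult, Rabs_inv. rewrite (Rabs_right (k^2)).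
    apply Rmult_le_compat_r. apply Rlt_le, Rinv_0_lt_compat. apply pow2_gt_0; auto.
    apply Rabs_le, SIN_bound. apply Rle_ge, pow2_ge_0.
Qed.

Theorem lemma11 (f : R -> R -> R) :
  smooth2 f -> (quasi_normal f \/ quasi_split_normal f) ->
  (forall k1 : R, k1 <> 0 ->
     exists Fre Fim : R -> R,
       (forall y : R,
          is_lim (fun r => RInt (fun x => f x y * cos (k1 * x)) (- r) r) p_infty (Fre y) /\
          is_lim (fun r => RInt (fun x => - (f x y * sin (k1 * x))) (- r) r) p_infty (Fim y)) /\
       (exists C, 0 < C /\ forall y, 1 < Rabs y ->
          sqrt (Fre y ^ 2 + Fim y ^ 2) <= C / y ^ 2)) /\
  (forall k2 : R, k2 <> 0 ->
     exists Gre Gim : R -> R,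
       (forall x : R,
          is_lim (fun r => RInt (fun y => f x y * cos (k2 * y)) (- r) r) p_infty (Gre x) /\
          is_lim (fun r => RInt (fun y => - (f x y * sin (k2 * y))) (- r) r) p_infty (Gim x)) /\
       (exists C, 0 < C /\ forall x, 1 < Rabs x ->
          sqrt (Gre x ^ 2 + Gim x ^ 2) <= C / x ^ 2)).
Proof.
  intros Hs Hq.
  assert (Hc : cond_i_iv f) by (destruct Hq as [[H _]|[H _]]; exact H).
  destruct Hc as [_ [_ [[Cv [HCv HV]] [[Cx [HCx HMx]] [Cy [HCy HMy]]]]]].
  split.
  - intros k1 Hk.
    destruct (trig1 k1 Hk) as [D1 [D2 [C1 [B1 B2]]]].
    destruct (trig2 k1 Hk) as [E1 [E2 [C2 [B3 B4]]]].
    assert (Hd : forall s t, ex_derive ((fun s t => f t s) s) t).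
    { intros s t. exact (proj1 (proj1 (Hs nil) t s)). }
    assert (Hdd : forall s t, ex_derive (fun u => Derive ((fun s t => f t s) s) u) t).
    { intros s t. exact (proj1 (proj1 (Hs (true :: nil)) t s)). }
    assert (HVF : exists C, 0 < C /\ forall s t, 1 < norm2 t s -> Rabs ((fun s t => f t s) s t) <= C / norm2 t s).
    { exists Cv. split; [auto|]. intros s t H. exact (HV t s H). }
    assert (HMF : exists C, 0 < C /\ forall s t, 1 < norm2 t s -> Rabs (Derive ((fun s t => f t s) s) t) <= C / (norm2 t s)^2).
    { exists Cx. split; [auto|]. intros s t H. exact (HMx t s H). }
    assert (HSp : good (fun s t => f t s) \/ exists R0 h1 h2, good h1 /\ good h2 /\
               forall s t, R0 < Rabs s -> (fun s t => f t s) s t = h1 s t + h2 s t).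
    { destruct Hq as [Hqn | [_ [R0 [f1 [f2 [S1 [S2 [Q1 [Q2 E]]]]]]]]].
      - left. apply goodF; auto.
      - right. exists R0, (fun s t => f1 t s), (fun s t => f2 t s).
        split; [apply goodF; auto|]. split; [apply goodF; auto|].
        intros s t H. apply E. pose proof (norm2_ge_r t s). lra. }
    destruct (core (fun s t => f t s) _ _ _ _ _ Hd Hdd HVF HMF HSp D1 D2 C1 B1 B2)
      as [Fre [HFre [Ca [HCa HBa]]]].
    destruct (core (fun s t => f t s) _ _ _ _ _ Hd Hdd HVF HMF HSp E1 E2 C2 B3 B4)
      as [Fim [HFim [Cb [HCb HBb]]]].
    exists Fre, Fim. split.
    + intros y. split. apply HFre.
      eapply is_lim_ext. 2: apply HFim. intros r. simpl. apply RInt_ext. intros. symmetry. apply Ropp_mult_distr_r.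
    + exists (Ca + Cb). split. lra. intros y Hy. apply sqrt_sum_bound; auto.
  - intros k2 Hk.
    destruct (trig1 k2 Hk) as [D1 [D2 [C1 [B1 B2]]]].
    destruct (trig2 k2 Hk) as [E1 [E2 [C2 [B3 B4]]]].
    assert (Hd : forall s t, ex_derive ((fun s t => f s t) s) t).
    { intros s t. exact (proj2 (proj1 (Hs nil) s t)). }
    assert (Hdd : forall s t, ex_derive (fun u => Derive ((fun s t => f s t) s) u) t).
    { intros s t. exact (proj2 (proj1 (Hs (false :: nil)) s t)). }
    assert (HVF : exists C, 0 < C /\ forall s t, 1 < norm2 t s -> Rabs ((fun s t => f s t) s t) <= C / norm2 t s).
    { exists Cv. split; [auto|]. intros s t H. rewrite norm2_sym in *. exact (HV s t H). }
    assert (HMF : exists C, 0 < C /\ forall s t, 1 < norm2 t s -> Rabs (Derive ((fun s t => f s t) s) t) <= C / (norm2 t s)^2).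
    { exists Cy. split; [auto|]. intros s t H. rewrite norm2_sym in *. exact (HMy s t H). }
    assert (HSp : good (fun s t => f s t) \/ exists R0 h1 h2, good h1 /\ good h2 /\
               forall s t, R0 < Rabs s -> (fun s t => f s t) s t = h1 s t + h2 s t).
    { destruct Hq as [Hqn | [_ [R0 [f1 [f2 [S1 [S2 [Q1 [Q2 E]]]]]]]]].
      - left. apply goodG; auto.
      - right. exists R0, (fun s t => f1 s t), (fun s t => f2 s t).
        split; [apply goodG; auto|]. split; [apply goodG; auto|].
        intros s t H. apply E. pose proof (norm2_ge_l s t). lra. }
    destruct (core (fun s t => f s t) _ _ _ _ _ Hd Hdd HVF HMF HSp D1 D2 C1 B1 B2)
      as [Fre [HFre [Ca [HCa HBa]]]].
    destruct (core (fun s t => f s t) _ _ _ _ _ Hd Hdd HVF HMF HSp E1 E2 C2 B3 B4)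
      as [Fim [HFim [Cb [HCb HBb]]]].
    exists Fre, Fim. split.
    + intros y. split. apply HFre.
      eapply is_lim_ext. 2: apply HFim. intros r. simpl. apply RInt_ext. intros. symmetry. apply Ropp_mult_distr_r.
    + exists (Ca + Cb). split. lra. intros y Hy. apply sqrt_sum_bound; auto.
Qed.
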